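(* Let $\mathcal{X}\subseteq\mathbb{R}^d$ be a feature space and $\mathcal{Y}\subseteq\mathbb{R}$ a label space. Let $p(\bm{x},y)$ be a data distribution on $\mathcal{X}\times\mathcal{Y}$, and let partial-label examples $(\bm{x},S)$ be drawn from a distribution $p(\bm{x},S)$, where $S\subseteq\mathcal{Y}$ is a set of real-valued candidate labels that always contains the true label $y$ of $\bm{x}$. Assume the ambiguity degree $$\gamma=\sup_{(\bm{x},y)\sim p(\bm{x},y),\,(\bm{x},S)\sim p(\bm{x},S),\,y'\in\mathcal{Y},\,y'\neq y} p(y'\in S)$$ satisfies $\gamma<1$. Let $\ell:\mathbb{R}\times\mathbb{R}\to\mathbb{R}_+$ be a regression loss, $\mathcal{F}$ a hypothesis space of models $f:\mathcal{X}\to\mathbb{R}$, $R(f)=\mathbb{E}_{p(\bm{x},y)}[\ell(f(\bm{x}),y)]$, and $f^\star=\arg\min_{f\in\mathcal{F}}R(f)$, where it is assumed that $R(f^\star)=0$. Define $\ell_{\min}(f(\bm{x}),S)=\min_{y\in S}\ell(f(\bm{x}),y)$ and $R_{\min}(f)=\mathbb{E}_{p(\bm{x},S)}[\ell_{\min}(f(\bm{x}),S)]$. Then the model $f^\star_{\min}=\arg\min_{f\in\mathcal{F}}R_{\min}(f)$ is equivalent to the optimal model $f^\star$.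
   Context: This is the partial-label regression setting: each training instance is annotated with a set of real-valued candidate labels, exactly one of which (the true label) is correct and it is always contained in the set. The hypothesis space $\mathcal{F}$ is assumed to be rich enough that the optimal fully-supervised risk is zero. *)

(* Defs.v *)
From HB Require Import structures.
From mathcomp Require Import all_boot all_order all_algebra.
From mathcomp Require Import all_classical all_reals all_analysis ess_sup_inf kernel.
Set Implicit Arguments. Unset Strict Implicit. Unset Printing Implicit Defensive.
Import Order.TTheory GRing.Theory Num.Theory.
Local Open Scope classical_set_scope.
Local Open Scope ring_scope.
Local Open Scope ereal_scope.

(* Candidate label sets are finite sets of reals, represented as sequences.
   A "random candidate set" is a map cand : O -> seq R from a measurable space
   that is measurable for the natural (disjoint-union-of-R^n) structure on
   seq R: its size and each of its coordinates are measurable. *)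
Definition measurable_candidates {dO} {O : measurableType dO} {R : realType}
  (cand : O -> seq R) : Prop :=
  (forall n : nat, measurable [set w | size (cand w) = n]) /\
  (forall k : nat, measurable_fun setT (fun w => nth 0%R (cand w) k)).

(* l_min(a, S) = min_{y in S} l(a, y)  (+oo for the empty set, never used
   since S always contains the true label). *)
Definition lmin {R : realType} (l : R -> R -> R) (a : R) (s : seq R) : \bar R :=
  \big[Order.min/+oo]_(y <- s) (l a y)%:E.

Definition risk {dT} {T : measurableType dT} {R : realType}
  (P : probability (T * R)%type R) (l : R -> R -> R) (f : T -> R) : \bar R :=
  \int[P]_z (l (f z.1) z.2)%:E.

(* R_min(f) = E_{p(x,S)} [ l_min(f(x), S) ], where (x,y) ~ P and the
   candidate set S = cand w with w ~ Q (x,y). *)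
Definition risk_min {dT dO} {T : measurableType dT} {O : measurableType dO}
  {R : realType} (P : probability (T * R)%type R) (Q : R.-pker (T * R)%type ~> O)
  (cand : O -> seq R) (l : R -> R -> R) (f : T -> R) : \bar R :=
  \int[P]_z \int[Q z]_w lmin l (f z.1) (cand w).

Definition ambiguity_degree {dT dO} {T : measurableType dT}
  {O : measurableType dO} {R : realType} (P : probability (T * R)%type R)
  (Q : R.-pker (T * R)%type ~> O) (cand : O -> seq R) (Y : set R) : \bar R :=
  ess_sup P (fun z : T * R =>
    ereal_sup [set Q z [set w | y' \in cand w] | y' in [set y' | Y y' /\ y' <> z.2]]).

(* Main.v *)
Require Import Defs.
From HB Require Import structures.
From mathcomp Require Import all_boot all_order all_algebra.
From mathcomp Require Import all_classical all_reals all_analysis ess_sup_inf kernel measurable_realfun.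
Import Order.TTheory GRing.Theory Num.Theory.
Local Open Scope classical_set_scope.
Local Open Scope ring_scope.
Local Open Scope ereal_scope.

Section helpers.
Context {R : realType} (l : R -> R -> R).
Hypothesis hl0 : forall a b, (0 <= l a b)%R.
Hypothesis hleq : forall a b, l a b = 0%R <-> a = b.

Lemma lmin_ge0 a s : 0 <= lmin l a s.
Proof.
rewrite /lmin; elim: s => [|y s IH]; first by rewrite big_nil leey.
by rewrite big_cons le_min IH lee_fin hl0.
Qed.

Lemma lmin_eq0 a s : lmin l a s = 0 <-> a \in s.
Proof.
elim: s => [|y s IH]; first by rewrite /lmin big_nil in_nil.
rewrite /lmin big_cons -/(lmin l a s) in_cons.
have hs := lmin_ge0 a s.
have hy : 0 <= (l a y)%:E by rewrite lee_fin hl0.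
split.
- rewrite minEle; case: ifP => _.
  + by move=> [/hleq ->]; rewrite eqxx.
  + by move=> /IH ->; rewrite orbT.
- case/orP => [/eqP <-|/IH h].
  + have -> : l a a = 0%R by apply/hleq.
    apply/eqP; rewrite eq_le ge_min le_min; apply/andP; split.
      by apply/orP; left; rewrite lee_fin.
    by apply/andP; split; [rewrite lee_fin|exact: hs].
  + apply/eqP; rewrite eq_le ge_min le_min; apply/andP; split.
      by apply/orP; right; rewrite h.
    by apply/andP; split; [exact: hy|rewrite h].
Qed.

Lemma lmin_nth a s :
  lmin l a s = \big[Order.min/+oo]_(k < size s) (l a (nth 0%R s k))%:E.
Proof. by rewrite /lmin (big_nth 0%R) big_mkord. Qed.

Hypothesis ml : measurable_fun setT (fun ab : R * R => l ab.1 ab.2).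

Lemma measurable_lmin d (X : measurableType d) (g : X -> R) (c : X -> seq R) :
  measurable_fun setT g ->
  (forall n, measurable [set x | size (c x) = n]) ->
  (forall k, measurable_fun setT (fun x => nth 0%R (c x) k)) ->
  measurable_fun [set: X] (fun x : X => (lmin l (g x) (c x) : \bar R)).
Proof.
move=> mg hs hn.
pose h n x := \big[Order.min/+oo]_(k < n) (l (g x) (nth 0%R (c x) k))%:E.
have mh n : measurable_fun setT (h n).
  rewrite /h; elim: n => [|n IH].
    under eq_fun do rewrite big_ord0.
    exact: measurable_cst.
  under eq_fun do rewrite big_ord_recr /=.
  apply: measurable_mine => //.
  apply/measurable_EFinP.
  have := measurableT_comp ml (measurable_fun_pair mg (hn n)).
  exact.
move=> _ B mB; rewrite setTI.
have -> : (fun x => lmin l (g x) (c x)) @^-1` B =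
    \bigcup_n ([set x | size (c x) = n] `&` (h n @^-1` B)).
  apply/seteqP; split => x /=.
    by move=> Bx; exists (size (c x)) => //; split => //=; rewrite /h -lmin_nth.
  by move=> [n _ [/= <-]]; rewrite /h -lmin_nth.
apply: bigcupT_measurable => n; apply: measurableI => //.
by have := mh n measurableT B mB; rewrite setTI.
Qed.
End helpers.
Theorem theorem1 (R : realType) (dT dO : measure_display)
  (T : measurableType dT) (O : measurableType dO)
  (Y : set R)
  (P : probability (T * R)%type R)
  (Q : R.-pker (T * R)%type ~> O)
  (cand : O -> seq R)
  (l : R -> R -> R)
  (F : set (T -> R)) (fstar fmin : T -> R) :
  (* p(x,y) is a distribution on X x Y *)
  {ae P, forall z, Y z.2} ->
  (* candidate sets: measurable random finite subsets of Y containing y *)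
  measurable_candidates cand ->
  (forall w y, y \in cand w -> Y y) ->
  {ae P, forall z, {ae Q z, forall w, z.2 \in cand w}} ->
  (* ambiguity degree *)
  ambiguity_degree P Q cand Y < 1 ->
  (* regression loss *)
  (forall a b, (0 <= l a b)%R) ->
  (forall a b, l a b = 0%R <-> a = b) ->
  measurable_fun setT (fun ab : R * R => l ab.1 ab.2) ->
  (* hypothesis space of measurable models *)
  (forall f, F f -> measurable_fun setT f) ->
  (* f* = argmin_F R, with R(f* ) = 0 *)
  F fstar -> (forall f, F f -> risk P l fstar <= risk P l f) ->
  risk P l fstar = 0 ->
  (* f*_min = argmin_F R_min *)
  F fmin -> (forall f, F f -> risk_min P Q cand l fmin <= risk_min P Q cand l f) ->
  {ae P, forall z, fmin z.1 = fstar z.1} /\ risk P l fmin = risk P l fstar.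
Proof.
move=> hY hmc hcY hcand hgam hl0 hleq hml hF Fs Rs R0 Fm Rm.
have mk f : measurable_fun setT f ->
    measurable_fun [set: (T * R)%type * O]
      (fun p => lmin l (f p.1.1) (cand p.2)).
  move=> mf; apply: (@measurable_lmin _ _ hml _ _ (fun p : (T * R)%type * O => f p.1.1) (fun p => cand p.2)) => //.
  - exact: measurableT_comp mf (measurableT_comp measurable_fst measurable_fst).
  - move=> n; have := measurable_snd measurableT _ (hmc.1 n).
    by move=> H; rewrite -[X in measurable X]setTI; apply: H.
  - by move=> k; exact: measurableT_comp (hmc.2 k) measurable_snd.
have mw a : measurable_fun [set: O] (fun w => lmin l a (cand w)).
  by apply: (@measurable_lmin _ _ hml _ _ (fun _ => a) cand);
    [exact: measurable_cst|exact: hmc.1|exact: hmc.2].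
have mI f : measurable_fun setT f ->
    measurable_fun [set: T * R] (fun z => \int[Q z]_w lmin l (f z.1) (cand w)).
  move=> mf.
  exact: (measurable_fun_integral_finite_kernel
            (fun p => lmin l (f p.1.1) (cand p.2)) Q (fun p => @lmin_ge0 _ l hl0 _ _) (mk f mf)).
have mrisk f : measurable_fun setT f ->
    measurable_fun [set: T * R] (fun z => (l (f z.1) z.2)%:E).
  move=> mf; apply/measurable_EFinP.
  have := measurableT_comp hml (measurable_fun_pair (measurableT_comp mf measurable_fst) measurable_snd).
  exact.
have h1 : {ae P, forall z, l (fstar z.1) z.2 = 0%R}.
  have : \int[P]_(z in setT) `|(l (fstar z.1) z.2)%:E| = 0.
    by rewrite -R0 /risk; apply: eq_integral => z _; rewrite gee0_abs // lee_fin.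
  move/(ae_eq_integral_abs P measurableT (mrisk _ (hF _ Fs))) => h.
  apply: filterS h => z /(_ I) /= /eqP; rewrite eqe => /eqP //.
have hR2 : risk_min P Q cand l fstar = 0.
  rewrite /risk_min (ae_eq_integral (cst 0)) ?integral0 //;
    try exact: measurable_cst; try exact: mI (hF _ Fs).
  apply: filterS2 h1 hcand => z hz hc _.
  rewrite /= (ae_eq_integral (cst 0)) ?integral0 //;
    try exact: measurable_cst; try exact: mw.
  apply: filterS hc => w hw _.
  by apply/(@lmin_eq0 _ l hl0 hleq); rewrite ((hleq _ _).1 hz).
have hRm : risk_min P Q cand l fmin = 0.
  apply/eqP; rewrite eq_le; apply/andP; split.
    by rewrite -hR2; exact: Rm.
  apply: integral_ge0 => z _; apply: integral_ge0 => w _.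
  exact: lmin_ge0.
have h4 : {ae P, forall z, \int[Q z]_w lmin l (fmin z.1) (cand w) = 0}.
  have : \int[P]_(z in setT) `|\int[Q z]_w lmin l (fmin z.1) (cand w)| = 0.
    rewrite -hRm /risk_min; apply: eq_integral => z _; rewrite gee0_abs //.
    by apply: integral_ge0 => w _; exact: lmin_ge0.
  move/(ae_eq_integral_abs P measurableT (mI _ (hF _ Fm))) => h.
  by apply: filterS h => z /(_ I).
have h6 := ess_sup_ge P (fun z : T * R =>
    ereal_sup [set Q z [set w | y' \in cand w] | y' in [set y' | Y y' /\ y' <> z.2]]).
have hae : {ae P, forall z, fmin z.1 = fstar z.1}.
  apply: filter_app hcand; apply: filter_app h6; apply: filter_app h4.
  apply: filterS h1 => z hz h4z h6z hcz.
  rewrite ((hleq _ _).1 hz).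
  apply: contrapT => neq.
  set a := fmin z.1.
  have h5 : {ae Q z, forall w, lmin l a (cand w) = 0}.
    have : \int[Q z]_(w in setT) `|lmin l a (cand w)| = 0.
      rewrite -h4z; apply: eq_integral => w _; rewrite gee0_abs //.
      exact: lmin_ge0.
    move/(ae_eq_integral_abs (Q z) measurableT (mw a)) => h.
    by apply: filterS h => w /(_ I).
  pose A := [set w | a \in cand w].
  have mA : measurable A.
    have := mw a measurableT [set (0 : \bar R)] (emeasurable_set1 (0 : \bar R)); rewrite setTI.
    congr measurable; apply/seteqP; split => w /=.
      by move/(@lmin_eq0 _ l hl0 hleq).
    by move/(@lmin_eq0 _ l hl0 hleq).
  have QA : 1 <= Q z A.
    case: h5 => N [mN N0 sub].
    rewrite -(@prob_kernel _ _ _ _ _ Q z).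
    apply: (@le_trans _ _ (Q z (A `|` N))).
      apply: le_measure; rewrite ?inE //; first exact: measurableU.
      move=> w _; have [Aw|nAw] := pselect (A w); first by left.
      right; apply: sub => /= hw; apply: nAw.
      by apply/(@lmin_eq0 _ l hl0 hleq).
    apply: (le_trans (measureU2 _ mA mN)).
    rewrite [X in _ + X <= _](_ : _ = 0) ?adde0 //; exact: N0.
  have [w Aw] : A !=set0.
    apply/set0P/eqP => A0; move: QA; by rewrite A0 measure0 leNgt lte01.
  have Ya : Y a := hcY w a Aw.
  have : 1 <= ess_sup P (fun z : T * R =>
    ereal_sup [set Q z [set w | y' \in cand w] | y' in [set y' | Y y' /\ y' <> z.2]]).
    apply: (le_trans QA); apply: (le_trans _ h6z).
    by apply: ereal_sup_ubound; exists a.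
  by rewrite leNgt hgam.
split => //.
rewrite /risk (ae_eq_integral (fun z => (l (fstar z.1) z.2)%:E)) //;
  try exact: mrisk (hF _ Fm); try exact: mrisk (hF _ Fs).
by apply: filterS hae => z e _; rewrite /= e.
Qed.
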